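(* Let $\mathcal{A}=\langle Q,q_\epsilon,\delta,\alpha\rangle$ be a D2PW over a finite alphabet $\Sigma$, with acceptance condition given by two priority functions $\Omega_1,\Omega_2:Q\to\mathbb{N}$ whose largest values are $d_1$ and $d_2$ respectively. Then one can construct a DPW $\mathcal{A}'$ such that $L(\mathcal{A})=L(\mathcal{A}')$, the number of priorities of $\mathcal{A}'$ is $O(d_1\cdot d_2)$, and the number of states of $\mathcal{A}'$ exceeds that of $\mathcal{A}$ by a factor $\sqrt{\min(d_1^{d_2},d_2^{d_1})}$ (i.e. $|Q'|$ is $|Q|$ times this factor).
   Context: A deterministic automaton over a finite alphabet $\Sigma$ is a tuple $\langle Q,q_\epsilon,\delta,\alpha\rangle$ with finite state set $Q$, initial state $q_\epsilon$, transition function $\delta:Q\times\Sigma\to Q$ and acceptance condition $\alpha$. The run on an infinite word $w=\sigma_0\sigma_1\dots$ is the unique sequence $q_0q_1\dots$ with $q_0=q_\epsilon$ and $q_{i+1}=\delta(q_i,\sigma_i)$. For a priority function $\Omega:Q\to\mathbb{N}$, a sequence of states satisfies the parity condition $\mathsf{Parity}(\Omega)$ if $\limsup_{j\to\infty}\Omega(q_j)$ is even. A D2PW is a deterministic automaton whose acceptance condition is given by two priority functions $\Omega_1,\Omega_2$: a word is accepted if its run satisfies both $\mathsf{Parity}(\Omega_1)$ and $\mathsf{Parity}(\Omega_2)$. A DPW (deterministic parity automaton) is the case with a single priority function (a word is accepted if its run satisfies that parity condition). $L(\cdot)$ denotes the set of accepted words. The number of priorities of a DPW refers to the range of its priority function.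 *)

(* Defs.v *)
From mathcomp Require Import all_boot.
From Stdlib Require Import Reals.
Set Implicit Arguments. Unset Strict Implicit. Unset Printing Implicit Defensive.

Definition word (Sigma : Type) := nat -> Sigma.

Fixpoint run (Sigma Q : Type) (q0 : Q) (delta : Q -> Sigma -> Q)
    (w : word Sigma) (i : nat) : Q :=
  match i with
  | 0 => q0
  | i'.+1 => delta (run q0 delta w i') (w i')
  end.

(* limsup of the (finitely-valued) sequence Om (r j) is even:
   there is an even k occurring infinitely often and eventually bounding. *)
Definition parity_sat (Q : Type) (Om : Q -> nat) (r : nat -> Q) : Prop :=
  exists k : nat, ~~ odd k /\
    (forall N, exists j, (N <= j)%N /\ Om (r j) = k) /\
    (exists N, forall j, (N <= j)%N -> (Om (r j) <= k)%N).

Definition D2PW_accepts (Sigma Q : Type) (q0 : Q) (delta : Q -> Sigma -> Q)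
    (Om1 Om2 : Q -> nat) (w : word Sigma) : Prop :=
  parity_sat Om1 (run q0 delta w) /\ parity_sat Om2 (run q0 delta w).

Definition DPW_accepts (Sigma Q : Type) (q0 : Q) (delta : Q -> Sigma -> Q)
    (Om : Q -> nat) (w : word Sigma) : Prop :=
  parity_sat Om (run q0 delta w).

(* Main.v *)
Require Import Defs.
From mathcomp Require Import all_boot.
From Stdlib Require Import Reals.
From Stdlib Require Import Lra Classical.
From mathcomp Require Import zify.

Module Helpers.
Local Notation "x ^ y" := (expn x y) : nat_scope.
Local Notation "x ^ y" := (expn x y) : nat_scope.

Lemma exp_pow_R (y : R) (n : nat) : (exp y ^ n = exp (INR n * y))%R.
Proof.
elim: n => [|n IH]; first by rewrite /= Rmult_0_l exp_0.
rewrite [(exp y ^ n.+1)%R]/= IH -exp_plus; f_equal. rewrite S_INR. lra.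
Qed.

Lemma expn_pow (m n : nat) : expn m n = Nat.pow m n.
Proof. elim: n => [|n IH] //. by rewrite expnS IH. Qed.

Lemma powA (b j : nat) : 0 < b -> j <= b -> (b.+1)^j <= 3 * b^j.
Proof.
move=> hb hj.
apply/leP; apply: INR_le. rewrite mult_INR !expn_pow !pow_INR.
have xpos : (0 < INR b)%R by apply: lt_0_INR; apply/ltP.
have jb : (INR j <= INR b)%R by apply: le_INR; apply/leP.
have ip : (0 < / INR b)%R by apply: Rinv_0_lt_compat.
have e1 : INR b.+1 = (INR b * (1 + / INR b))%R.
  rewrite S_INR; field; lra.
rewrite e1 Rpow_mult_distr.
have h1 : ((1 + / INR b) ^ j <= 3)%R.
  apply: Rle_trans (exp_le_3).
  apply: Rle_trans (_ : exp (/ INR b) ^ j <= _)%R.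
    apply: pow_incr; split; [lra| apply: exp_ineq1_le].
  rewrite exp_pow_R.
  have h2 : (INR j * / INR b <= 1)%R.
    apply (Rmult_le_reg_r (INR b)) => //. rewrite Rmult_assoc Rinv_l; lra.
  case: (Rle_lt_or_eq_dec _ _ h2) => h3.
    by apply: Rlt_le; apply: exp_increasing.
  by rewrite h3; lra.
have h4 : (0 <= INR b ^ j)%R by apply: pow_le; lra.
have -> : INR 3 = 3%R by rewrite /=; lra.
rewrite Rmult_comm. apply: Rmult_le_compat_r => //.
Qed.

Lemma powB (a b : nat) : 3 <= a -> a <= b -> b ^ a <= a ^ b.
Proof.
move=> ha; elim: b => [|b IH] hab; first by lia.
case: (ltnP a b.+1) => hlt; last by have -> : a = b.+1 by lia.
have := IH (ltnSE hlt).
have := powA b (a) ltac:(lia) ltac:(lia).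
move=> h1 h2; rewrite expnS.
apply: leq_trans h1 _. apply: leq_trans (_ : a * b ^ a <= _).
  by rewrite leq_mul2r ha orbT.
by rewrite leq_mul2l h2 orbT.
Qed.

Lemma powC (b : nat) : b ^ 2 <= 2 * 2 ^ b.
Proof.
elim: b => [|b IH] //.
case: (leqP b 2) => hb.
  by case: b hb IH => [|[|[|]]].
rewrite [2 ^ b.+1]expnS. apply: leq_trans (_ : 2 * b ^ 2 <= _).
  rewrite !expnS !expn0 !muln1. nia.
lia.
Qed.

Lemma size_bound (a b : nat) : 0 < a -> a <= b ->
  ((b.+1) ^ (a./2)) * ((b.+1) ^ (a./2)) <= 36 * minn (a ^ b) (b ^ a).
Proof.
move=> ha hab.
rewrite -expnD addnn.
have hj : a./2.*2 <= a by rewrite -{2}(odd_double_half a) leq_addl.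
have h1 : (b.+1) ^ (a./2.*2) <= 3 * b ^ a.
  apply: leq_trans (powA b (a./2.*2) ltac:(lia) ltac:(lia)) _.
  by rewrite leq_mul2l leq_pexp2l //; lia.
have h2 : (b.+1) ^ (a./2.*2) <= 6 * a ^ b.
  case: (ltnP a 3) => h3.
    case: a ha hab hj h1 h3 => [|[|[|]]] //= _ hab _ h1 _.
      by rewrite exp1n expn0; lia.
    apply: leq_trans h1 _.
    have := powC b. rewrite -/(2 ^ 2) //. lia.
  apply: leq_trans (_ : 3 * a ^ b <= _); last by lia.
  apply: leq_trans h1 _. by rewrite leq_mul2l powB.
rewrite /minn; case: ifP => _; lia.
Qed.
Set Implicit Arguments. Unset Strict Implicit.

Definition isLS (x : nat -> nat) (L : nat) : Prop :=
  (forall N, exists j, N <= j /\ x j = L) /\ (exists N, forall j, N <= j -> x j <= L).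

Lemma isLS_ex_ev B : forall x, (exists N, forall t, N <= t -> x t <= B) -> exists L, isLS x L.
Proof.
elim: B => [|B IH] x [N HN].
  exists 0; split; last by exists N.
  move=> M; exists (maxn N M); split; first by rewrite leq_maxr.
  have := HN (maxn N M) (leq_maxl _ _); lia.
case: (classic (forall M, exists j, M <= j /\ x j = B.+1)) => H.
  by exists B.+1; split => //; exists N.
apply not_all_ex_not in H; case: H => M HM.
apply: IH; exists (maxn N M) => t Ht.
have h1 := HN t (leq_trans (leq_maxl _ _) Ht).
case: (eqVneq (x t) B.+1) => h2; last by lia.
by exfalso; apply: HM; exists t; split => //; apply: leq_trans (leq_maxr _ _) Ht.
Qed.

Lemma isLS_ex B x : (forall t, x t <= B) -> exists L, isLS x L.
Proof. by move=> H; apply: (isLS_ex_ev (B := B)); exists 0. Qed.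

Lemma isLS_uniq x L1 L2 : isLS x L1 -> isLS x L2 -> L1 = L2.
Proof.
move=> [i1 [N1 e1]] [i2 [N2 e2]].
have [j1 [hj1 ej1]] := i1 N2. have [j2 [hj2 ej2]] := i2 N1.
have := e2 _ hj1; have := e1 _ hj2; lia.
Qed.

Lemma core (p r o m : nat -> nat) (a b D : nat) :
  isLS p a -> isLS r b -> (forall t, r t < D) -> 1 < D ->
  (forall t, p t < a -> o t < a * D) ->
  (forall t, p t = a -> odd a -> o t = a * D + 1) ->
  (forall t, p t = a -> a = 0 -> o t = r t) ->
  (forall t, p t = a -> ~~ odd a -> 0 < a -> o t = a * D + maxn (m t) (r t)) ->
  (forall t, ~~ odd a -> 0 < a -> m t.+1 = if a <= p t then 0 else maxn (m t) (r t)) ->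
  isLS o (a * D + (if odd a then 1 else b)).
Proof.
move=> [ia [Na ea]] [ib [Nb eb]] hrD hD olt oodd o0 oev hm.
set N0 := maxn Na Nb.
have pa : forall t, N0 <= t -> p t <= a by move=> t ht; apply: ea; lia.
have rb : forall t, N0 <= t -> r t <= b by move=> t ht; apply: eb; lia.
case: (boolP (odd a)) => hodd.
  split.
    move=> N; have [j [hj ej]] := ia N; exists j; split => //; exact: oodd.
  exists N0 => t ht; have := pa t ht; rewrite leq_eqVlt; case/orP.
    by move/eqP => h; rewrite oodd.
  by move=> h; have := olt t h; lia.
case: (posnP a) => ha0.
  split.
    move=> N; have [j [hj ej]] := ib (maxn N N0); exists j; split; first by lia.
    have := pa j ltac:(lia); rewrite ha0 => h.
    by rewrite o0 ?ha0 ?ej //; lia.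
  exists N0 => t ht; have := pa t ht; have := rb t ht; rewrite ha0 => h1 h2.
  by rewrite o0 ?ha0 //; lia.
have [s1 [hs1 es1]] := ia N0.
have mb : forall n, m (s1.+1 + n) <= b.
  elim=> [|n IH]; first by rewrite addn0 hm // es1 leqnn.
  rewrite addnS hm //; case: ifP => _ //.
  have := rb (s1.+1 + n) ltac:(lia); lia.
have ub : forall t, s1 < t -> o t <= a * D + b.
  move=> t ht; have := pa t ltac:(lia); rewrite leq_eqVlt; case/orP.
    move/eqP => h; rewrite oev //.
    have := mb (t - s1.+1); rewrite subnKC //; have := rb t ltac:(lia); lia.
  by move=> h; have := olt t h; lia.
split; last by exists s1.+1 => t ht; apply: ub.
move=> N.
have [t1 [ht1 et1]] := ib (maxn N s1.+1).
have exP : exists n, (t1 <= n) && (p n == a).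
  have [j [hj ej]] := ia t1; exists j; by rewrite hj ej eqxx.
case: (ex_minnP exP) => t2 /andP [h12 /eqP e2] hmin.
exists t2; split; first by lia.
have below : forall s, t1 <= s < t2 -> p s < a.
  move=> s /andP [hs1' hs2]; have := pa s ltac:(lia); rewrite leq_eqVlt; case/orP => //.
  move=> h; have := hmin s; rewrite hs1' h /=; move=> /(_ isT); lia.
have grow : forall n, t1 + n < t2 -> r t1 <= m (t1 + n).+1.
  elim=> [|n IH] hn.
    have hlt : p t1 < a by apply: below; lia.
    by rewrite addn0 hm // [a <= _]leqNgt hlt /=; lia.
  rewrite addnS hm //.
  have hlt : p (t1 + n).+1 < a by rewrite -addnS; apply: below; lia.
  rewrite [a <= _]leqNgt hlt /=; have := IH ltac:(lia); lia.
apply/eqP; rewrite eqn_leq ub ?andTb; last by lia.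
rewrite oev //.
move: h12; rewrite leq_eqVlt; case/orP.
  by move/eqP => <-; rewrite et1; lia.
move=> h12; have := grow (t2 - t1).-1 ltac:(lia).
have -> : (t1 + (t2 - t1).-1).+1 = t2 by lia.
rewrite et1; lia.
Qed.

Definition look {k d2} (M : {ffun 'I_k -> 'I_d2.+1}) (n : nat) : nat :=
  if (insub n : option 'I_k) is Some j then val (M j) else 0.

Definition upd {k d2} (M : {ffun 'I_k -> 'I_d2.+1}) (p r : nat) : {ffun 'I_k -> 'I_d2.+1} :=
  [ffun j : 'I_k => if (j.+1).*2 <= p then ord0 else inord (maxn (M j) r)].

Definition outp {k d2} (D : nat) (M : {ffun 'I_k -> 'I_d2.+1}) (p r : nat) : nat :=
  if odd p then p * D + 1 else p * D + (if p == 0 then r else maxn (look M (p./2.-1)) r).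

Fixpoint memr {Sigma Q : Type} (q0 : Q) (delta : Q -> Sigma -> Q) (Om1 Om2 : Q -> nat)
   (k d2 : nat) (w : word Sigma) (t : nat) : {ffun 'I_k -> 'I_d2.+1} :=
  match t with
  | 0 => [ffun _ => ord0]
  | t'.+1 => upd (memr q0 delta Om1 Om2 k d2 w t') (Om1 (run q0 delta w t')) (Om2 (run q0 delta w t'))
  end.

Lemma look_le {k d2} (M : {ffun 'I_k -> 'I_d2.+1}) n : look M n <= d2.
Proof. rewrite /look; case: insubP => // j _ _; exact: (ltn_ord (M j)). Qed.

Lemma look_upd {k d2} (M : {ffun 'I_k -> 'I_d2.+1}) p r jj : jj < k -> r <= d2 ->
  look (upd M p r) jj = if (jj.+1).*2 <= p then 0 else maxn (look M jj) r.
Proof.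
move=> hj hr; rewrite /look; case: insubP => [j _ ej|]; last by rewrite hj.
rewrite ffunE -ej; case: ifP => // _.
rewrite /= inordK //; have := ltn_ord (M j); rewrite ltnS => h; lia.
Qed.

Lemma outp_lt {k d2} D (M : {ffun 'I_k -> 'I_d2.+1}) p r : r <= d2 -> D = (d2.+1).*2 ->
  outp D M p r < p.+1 * D.
Proof.
move=> hr ->; have := look_le M (p./2.-1); rewrite /outp mulSn.
case: (odd p); case: (p == 0); lia.
Qed.

Lemma isLS_ext x y L : (forall t, x t = y t) -> isLS x L -> isLS y L.
Proof.
move=> e [h1 [N h2]]; split.
  by move=> M; have [j [hj ej]] := h1 M; exists j; rewrite -e.
by exists N => j hj; rewrite -e; apply: h2.
Qed.

Lemma main (Sigma Q : finType) (q0 : Q) (delta : Q -> Sigma -> Q) (Om1 Om2 : Q -> nat) (d1 d2 : nat) :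
  (forall q, Om1 q <= d1) -> (forall q, Om2 q <= d2) ->
  forall w : word Sigma,
   D2PW_accepts q0 delta Om1 Om2 w <->
   DPW_accepts (Q := (Q * {ffun 'I_(d1./2) -> 'I_d2.+1})%type) (q0, [ffun _ => ord0])
     (fun s a => (delta s.1 a, upd s.2 (Om1 s.1) (Om2 s.1)))
     (fun s => outp ((d2.+1).*2) s.2 (Om1 s.1) (Om2 s.1)) w.
Proof.
move=> h1 h2 w.
set k := d1./2. set D := (d2.+1).*2.
have runE : forall t, run (Q := (Q * {ffun 'I_k -> 'I_d2.+1})%type) (q0, [ffun _ => ord0])
     (fun s a => (delta s.1 a, upd s.2 (Om1 s.1) (Om2 s.1))) w t
     = (run q0 delta w t, memr q0 delta Om1 Om2 k d2 w t).
  by elim => //= t ->.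
set p := fun t => Om1 (run q0 delta w t).
set r := fun t => Om2 (run q0 delta w t).
set o := fun t => outp D (memr q0 delta Om1 Om2 k d2 w t) (p t) (r t).
have [a Ha] := isLS_ex (B := d1) (x := p) (fun t => h1 _).
have [b Hb] := isLS_ex (B := d2) (x := r) (fun t => h2 _).
have ad1 : a <= d1 by case: Ha => [/(_ 0) [j [_ <-]] _]; apply: h1.
have Ho : isLS o (a * D + (if odd a then 1 else b)).
  apply: (core (m := fun t => look (memr q0 delta Om1 Om2 k d2 w t) (a./2.-1))) Ha Hb _ _ _ _ _ _ _.
  - by move=> t; apply: leq_ltn_trans (h2 _) _; rewrite /D; lia.
  - by rewrite /D; lia.
  - move=> t hlt; apply: leq_trans (outp_lt _ _ (h2 _) erefl) _.
    by rewrite leq_mul2r hlt orbT.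
  - by move=> t ht hodd; rewrite /o /outp ht hodd.
  - by move=> t ht h0; rewrite /o /outp ht h0 /= mul0n add0n.
  - move=> t ht hodd hpos; rewrite /o /outp ht (negbTE hodd).
    by have -> : (a == 0) = false by lia.
  - move=> t hodd hpos /=.
    have e2 : ((a./2.-1).+1).*2 = a.
      have := odd_double_half a; rewrite (negbTE hodd) add0n => e.
      rewrite prednK //; lia.
    rewrite look_upd ?e2 //.
    rewrite /k; have := odd_double_half a; have := odd_double_half d1; lia.
have oddL : forall c, odd (a * D + c) = odd c.
  by move=> c; rewrite oddD oddM /D odd_double andbF.
rewrite /D2PW_accepts /DPW_accepts /parity_sat.
split.
  move=> [[k1 [ek1 Hk1]] [k2 [ek2 Hk2]]].
  have ea : a = k1 by apply: (isLS_uniq Ha Hk1).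
  have eb : b = k2 by apply: (isLS_uniq Hb Hk2).
  exists (a * D + (if odd a then 1 else b)); split.
    by rewrite oddL ea (negbTE ek1) eb.
  by apply: (isLS_ext _ Ho) => t; rewrite runE.
move=> [L [eL HL]].
have HL' : isLS o L by apply: (isLS_ext _ HL) => t; rewrite runE.
have eL' := isLS_uniq HL' Ho.
move: eL; rewrite eL' oddL.
case: (boolP (odd a)) => // hoa hob.
by split; [exists a | exists b].
Qed.

Lemma real_bound (n X mn : nat) : X * X <= 36 * mn ->
  (INR (n * X) <= INR 8 * INR n * sqrt (INR mn))%R.
Proof.
move=> h.
have h' : (INR X * INR X <= 36 * INR mn)%R.
  rewrite -mult_INR. have -> : (36 = INR 36)%R by rewrite /=; lra.
  rewrite -mult_INR; apply: le_INR; apply/leP; exact: h.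
have hX : (0 <= INR X)%R by apply: pos_INR.
have hm : (0 <= INR mn)%R by apply: pos_INR.
have hn : (0 <= INR n)%R by apply: pos_INR.
have hs : (INR X <= 6 * sqrt (INR mn))%R.
  rewrite -(sqrt_square (INR X)) //.
  apply: Rle_trans (_ : sqrt (36 * INR mn) <= _)%R; first by apply: sqrt_le_1_alt.
  rewrite sqrt_mult; try lra.
  have -> : (36 = 6 * 6)%R by lra.
  rewrite sqrt_square; lra.
have h8 : INR 8 = 8%R by rewrite /=; lra.
rewrite mult_INR h8.
have hsq : (0 <= sqrt (INR mn))%R by apply: sqrt_pos.
nra.
Qed.

Lemma prio_bound (p d1 d2 : nat) : 0 < d1 -> 0 < d2 -> p <= d1 ->
  p.+1 * (d2.+1).*2 <= 8 * (d1 * d2).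
Proof. move=> h1 h2 h3; rewrite -muln2. nia. Qed.

Lemma pow_conv (m n : nat) : Nat.pow m n = expn m n.
Proof. by rewrite expn_pow. Qed.

End Helpers.
Import Helpers.

Theorem theorem2 :
  exists C : nat,
  forall (Sigma Q : finType) (q0 : Q) (delta : Q -> Sigma -> Q) (Om1 Om2 : Q -> nat),
  let d1 := (\max_(q : Q) Om1 q)%N in
  let d2 := (\max_(q : Q) Om2 q)%N in
  (1 <= d1)%N -> (1 <= d2)%N ->
  exists (Q' : finType) (q0' : Q') (delta' : Q' -> Sigma -> Q') (Om : Q' -> nat),
    (forall w : word Sigma, D2PW_accepts q0 delta Om1 Om2 w <-> DPW_accepts q0' delta' Om w) /\
    (forall q : Q', (Om q < C * (d1 * d2))%N) /\
    (INR #|Q'| <= INR C * INR #|Q| * sqrt (INR (minn (d1 ^ d2) (d2 ^ d1))))%R.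
Proof.
exists 8 => Sigma Q q0 delta Om1 Om2 d1 d2 hd1 hd2.
have b1 : forall q, Om1 q <= d1 by move=> q; apply: leq_bigmax.
have b2 : forall q, Om2 q <= d2 by move=> q; apply: leq_bigmax.
rewrite !pow_conv.
case: (leqP d1 d2) => hle.
  exists (Q * {ffun 'I_(d1./2) -> 'I_d2.+1})%type, (q0, [ffun _ => ord0]),
    (fun s a => (delta s.1 a, upd s.2 (Om1 s.1) (Om2 s.1))),
    (fun s => outp ((d2.+1).*2) s.2 (Om1 s.1) (Om2 s.1)).
  split; first exact: main b1 b2.
  split.
    move=> [q M] /=; apply: leq_trans (outp_lt _ _ (b2 q) erefl) _.
    exact: prio_bound.
  rewrite card_prod card_ffun !card_ord.
  apply: real_bound. exact: size_bound.
exists (Q * {ffun 'I_(d2./2) -> 'I_d1.+1})%type, (q0, [ffun _ => ord0]),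
  (fun s a => (delta s.1 a, upd s.2 (Om2 s.1) (Om1 s.1))),
  (fun s => outp ((d1.+1).*2) s.2 (Om2 s.1) (Om1 s.1)).
split.
  move=> w; rewrite -(main _ _ b2 b1 w) /D2PW_accepts; tauto.
split.
  move=> [q M] /=; apply: leq_trans (outp_lt _ _ (b1 q) erefl) _.
  rewrite [d1 * d2]mulnC; exact: prio_bound.
rewrite card_prod card_ffun !card_ord minnC.
apply: real_bound. apply: size_bound => //; lia.
Qed.
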